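(* Let $G=(V,E)$ be a finite simple graph with at least one vertex, and let $G'$ be its connection graph. For a simplex $x$ and an integer $k\ge 1$, let $P(k,x)$ be the number of walks of length $k$ in $G'$ starting at $x$. Put $P(k)=\max_x P(k,x)$ and $r_k=1+P(k)^{1/k}$. Then, for every $k\ge 1$, the spectral radius $\rho$ of the Hodge Laplacian $H=(d+d^T)^2$ of $G$ satisfies $$\rho \le r_k-\frac{1}{r_k}.$$ Moreover, $r_k - 1/r_k$ converges, as $k\to\infty$, to the spectral radius of the sign-less Hodge Laplacian $|H|$.
   Context: Let $G=(V,E)$ be a finite simple graph. Its associated $1$-dimensional simplicial complex is the set of simplices $X=\{\{v\}: v\in V\}\cup E$, where each edge is regarded as a $2$-element subset of $V$; put $N=|V|+|E|$ and index $N\times N$ matrices by $X$. The connection graph $G'$ has vertex set $X$, and two distinct $x,y\in X$ are adjacent iff $x\cap y\neq\emptyset$. A walk of length $k$ from $x$ is a sequence $x=x_0,x_1,\dots,x_k$ of vertices of $G'$ in which consecutive entries are adjacent. For the Hodge Laplacian, fix an orientation of each edge; for an edge $x=\{a,b\}$ oriented from $a$ to $b$ set $d(x,\{a\})=-1$, $d(x,\{b\})=1$, and let all other entries of $d$ be $0$. The Hodge Laplacian is $H=(d+d^T)^2$; its spectrum does not depend on the chosen orientation. The sign-less exterior derivative $|d|$ has $|d|(x,y)=1$ if $y\subset x$ and $|x|=|y|+1$, and $0$ otherwise; the sign-less Hodge Laplacian is $|H|=(|d|+|d|^T)^2$. *)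

(* Defs.v *)
From Stdlib Require Import Reals Lra Lia Arith List Bool.
Import ListNotations.
Open Scope R_scope.

(* A finite simple graph on vertex set {0,...,n-1}, given by a boolean
   adjacency relation adj (assumed symmetric and irreflexive). *)

(* Simplices of the 1-dimensional complex: vertices {i} and edges {i,j},
   an edge being stored as SE i j with i < j. *)
Inductive simplex : Type := SV (i : nat) | SE (i j : nat).

Definition simplex_eqb (x y : simplex) : bool :=
  match x, y with
  | SV i, SV j => Nat.eqb i j
  | SE a b, SE c d => Nat.eqb a c && Nat.eqb b d
  | _, _ => false
  end.

Definition simplices (n : nat) (adj : nat -> nat -> bool) : list simplex :=
  map SV (seq 0 n) ++
  flat_map (fun i =>
    flat_map (fun j => if adj i j then [SE i j] else [])
             (seq (S i) (n - S i)))
    (seq 0 n).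

Definition meets (x y : simplex) : bool :=
  match x, y with
  | SV i, SV j => Nat.eqb i j
  | SV i, SE a b | SE a b, SV i => Nat.eqb i a || Nat.eqb i b
  | SE a b, SE c d => Nat.eqb a c || Nat.eqb a d || Nat.eqb b c || Nat.eqb b d
  end.

Definition cg_adj (x y : simplex) : bool := negb (simplex_eqb x y) && meets x y.

Fixpoint walks (X : list simplex) (k : nat) (x : simplex) : nat :=
  match k with
  | O => 1%nat
  | S k' => fold_right Nat.add 0%nat
              (map (fun y => if cg_adj x y then walks X k' y else 0%nat) X)
  end.

Definition Pmax (X : list simplex) (k : nat) : nat :=
  fold_right Nat.max 0%nat (map (walks X k) X).

(* k-th root of a nonnegative real (with root of 0 equal to 0). *)
Definition kth_root (x : R) (k : nat) : R :=
  if Rle_dec x 0 then 0 else Rpower x (/ INR k).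

Definition rk (X : list simplex) (k : nat) : R :=
  1 + kth_root (INR (Pmax X k)) k.

Definition hbound (X : list simplex) (k : nat) : R := rk X k - / rk X k.

(* Matrices and vectors indexed by simplices; only entries in X matter. *)
Definition Mat := simplex -> simplex -> R.

Definition sumX (X : list simplex) (f : simplex -> R) : R :=
  fold_right Rplus 0 (map f X).

Definition mat_mul (X : list simplex) (A B : Mat) : Mat :=
  fun x y => sumX X (fun z => A x z * B z y).

Definition transp (A : Mat) : Mat := fun x y => A y x.
Definition mat_add (A B : Mat) : Mat := fun x y => A x y + B x y.

(* Exterior derivative for an orientation o: the edge {a,b} (a<b) is oriented
   from a to b if o a b = true, from b to a otherwise. *)
Definition dmat (o : nat -> nat -> bool) : Mat :=
  fun x y =>
    match x, y with
    | SE a b, SV c =>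
        let s := if o a b then a else b in
        let t := if o a b then b else a in
        if Nat.eqb c s then -1 else if Nat.eqb c t then 1 else 0
    | _, _ => 0
    end.

Definition absdmat : Mat :=
  fun x y =>
    match x, y with
    | SE a b, SV c => if Nat.eqb c a || Nat.eqb c b then 1 else 0
    | _, _ => 0
    end.

Definition hodge (X : list simplex) (o : nat -> nat -> bool) : Mat :=
  let D := mat_add (dmat o) (transp (dmat o)) in mat_mul X D D.

Definition abs_hodge (X : list simplex) : Mat :=
  let D := mat_add absdmat (transp absdmat) in mat_mul X D D.

(* a + i b is a (complex) eigenvalue of M (as an operator on R^X ⊗ C):
   there is a nonzero u + i v with M(u + i v) = (a + i b)(u + i v). *)
Definition is_eigenvalue (X : list simplex) (M : Mat) (a b : R) : Prop :=
  exists u v : simplex -> R,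
    (exists z, In z X /\ (u z <> 0 \/ v z <> 0)) /\
    forall x, In x X ->
      sumX X (fun z => M x z * u z) = a * u x - b * v x /\
      sumX X (fun z => M x z * v z) = b * u x + a * v x.

Definition spectral_radius (X : list simplex) (M : Mat) (rho : R) : Prop :=
  (exists a b, is_eigenvalue X M a b /\ sqrt (a * a + b * b) = rho) /\
  (forall a b, is_eigenvalue X M a b -> sqrt (a * a + b * b) <= rho).

(* Main.v *)
Require Import Defs.
From Stdlib Require Import Reals Lra Lia Arith List Bool Classical FunctionalExtensionality.
Import ListNotations.
Open Scope R_scope.


Definition sdec : forall x y : simplex, {x = y} + {x <> y}.
Proof. decide equality; apply Nat.eq_dec. Defined.

Section Sums.
Implicit Types (X : list simplex) (f g : simplex -> R).

Lemma sumX_nil f : sumX [] f = 0. Proof. reflexivity. Qed.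
Lemma sumX_cons a X f : sumX (a :: X) f = f a + sumX X f. Proof. reflexivity. Qed.
Lemma sumX_app X Y f : sumX (X ++ Y) f = sumX X f + sumX Y f.
Proof. induction X as [|a X IH]; simpl app; [rewrite sumX_nil; lra|]. rewrite !sumX_cons, IH; lra. Qed.

Lemma sumX_ext X f g : (forall x, In x X -> f x = g x) -> sumX X f = sumX X g.
Proof. induction X as [|a X IH]; intros H; [reflexivity|]. rewrite !sumX_cons.
  rewrite H by (left; auto). rewrite IH; auto. intros; apply H; right; auto. Qed.

Lemma sumX_add X f g : sumX X (fun x => f x + g x) = sumX X f + sumX X g.
Proof. induction X as [|a X IH]; [simpl; unfold sumX; simpl; lra|]. rewrite !sumX_cons, IH; lra. Qed.

Lemma sumX_sub X f g : sumX X (fun x => f x - g x) = sumX X f - sumX X g.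
Proof. induction X as [|a X IH]; [simpl; unfold sumX; simpl; lra|]. rewrite !sumX_cons, IH; lra. Qed.

Lemma sumX_scal X c f : sumX X (fun x => c * f x) = c * sumX X f.
Proof. induction X as [|a X IH]; [simpl; unfold sumX; simpl; lra|]. rewrite !sumX_cons, IH; lra. Qed.

Lemma sumX_scal_r X c f : sumX X (fun x => f x * c) = sumX X f * c.
Proof. induction X as [|a X IH]; [simpl; unfold sumX; simpl; lra|]. rewrite !sumX_cons, IH; lra. Qed.

Lemma sumX_zero X f : (forall x, In x X -> f x = 0) -> sumX X f = 0.
Proof. intros H. rewrite (sumX_ext X f (fun _ => 0)) by auto.
  induction X; [reflexivity|]. rewrite sumX_cons, IHX; [lra|]. intros; apply H; right; auto. Qed.

Lemma sumX_le X f g : (forall x, In x X -> f x <= g x) -> sumX X f <= sumX X g.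
Proof. induction X as [|a X IH]; intros H; [unfold sumX; simpl; lra|]. rewrite !sumX_cons.
  assert (f a <= g a) by (apply H; left; auto).
  assert (sumX X f <= sumX X g) by (apply IH; intros; apply H; right; auto). lra. Qed.

Lemma sumX_nonneg X f : (forall x, In x X -> 0 <= f x) -> 0 <= sumX X f.
Proof. intros H. rewrite <- (sumX_zero X (fun _ => 0)) by auto. apply sumX_le; auto. Qed.

Lemma sumX_term X f x : (forall y, In y X -> 0 <= f y) -> In x X -> f x <= sumX X f.
Proof. induction X as [|a X IH]; intros H Hx; [destruct Hx|]. rewrite sumX_cons.
  destruct Hx as [<-|Hx].
  - assert (0 <= sumX X f) by (apply sumX_nonneg; intros; apply H; right; auto). lra.
  - assert (0 <= f a) by (apply H; left; auto).
    assert (f x <= sumX X f) by (apply IH; auto; intros; apply H; right; auto). lra. Qed.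

Lemma sumX_swap X Y (F : simplex -> simplex -> R) :
  sumX X (fun x => sumX Y (fun y => F x y)) = sumX Y (fun y => sumX X (fun x => F x y)).
Proof. induction X as [|a X IH].
  - rewrite sumX_nil. symmetry. apply sumX_zero. intros; reflexivity.
  - rewrite sumX_cons, IH. rewrite <- sumX_add. apply sumX_ext. intros; rewrite sumX_cons; reflexivity. Qed.

Lemma sumX_abs X f : Rabs (sumX X f) <= sumX X (fun x => Rabs (f x)).
Proof. induction X as [|a X IH]; [unfold sumX; simpl; rewrite Rabs_R0; lra|]. rewrite !sumX_cons.
  eapply Rle_trans; [apply Rabs_triang|]. lra. Qed.

Lemma sumX_delta X x f : NoDup X -> In x X ->
  sumX X (fun z => if sdec z x then f z else 0) = f x.
Proof. induction X as [|a X IH]; intros Hnd Hx; [destruct Hx|]. inversion Hnd; subst.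
  rewrite sumX_cons. destruct Hx as [<-|Hx].
  - destruct (sdec a a); [|congruence]. rewrite sumX_zero; [lra|].
    intros y Hy. destruct (sdec y a); [subst; contradiction|reflexivity].
  - destruct (sdec a x); [subst; contradiction|]. rewrite IH; auto; lra. Qed.

Lemma sumX_delta' X x f : NoDup X -> In x X ->
  sumX X (fun z => if sdec x z then f z else 0) = f x.
Proof. intros. rewrite <- (sumX_delta X x f) by auto. apply sumX_ext; intros.
  destruct (sdec x x0), (sdec x0 x); subst; congruence. Qed.

Lemma sumX_const1 X : sumX X (fun _ => 1) = INR (length X).
Proof. induction X; [reflexivity|]. rewrite sumX_cons, IHX. simpl length. rewrite S_INR. lra. Qed.

Lemma sumX_ext_cons_out a X (t : R) (v : simplex -> R) (F : simplex -> R -> R) : ~ In a X ->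
  sumX X (fun z => F z (if sdec z a then t else v z)) = sumX X (fun z => F z (v z)).
Proof. intros H. apply sumX_ext. intros z Hz. destruct (sdec z a); [subst; contradiction|reflexivity]. Qed.

End Sums.


Definition dot X (u v : simplex -> R) := sumX X (fun x => u x * v x).
Definition app X (M : Mat) (u : simplex -> R) := fun x => sumX X (fun z => M x z * u z).
Definition qf X M v := dot X v (app X M v).
Definition symX X (M : Mat) := forall x y, In x X -> In y X -> M x y = M y x.
Definition nz X (u : simplex -> R) := exists z, In z X /\ u z <> 0.
Definition top X M lam :=
  (exists u, nz X u /\ forall x, In x X -> app X M u x = lam * u x) /\
  forall v, qf X M v <= lam * dot X v v.
Definition negM (M : Mat) : Mat := fun x y => - M x y.
Definition ext a (t : R) (v : simplex -> R) := fun z => if sdec z a then t else v z.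
Definition ev x := fun z => if sdec z x then 1 else 0.

Lemma dot_nonneg X v : 0 <= dot X v v.
Proof. apply sumX_nonneg; intros; nra. Qed.

Lemma sq_le_dot X v x : In x X -> v x * v x <= dot X v v.
Proof. intros; apply (sumX_term X (fun x => v x * v x)); auto; intros; nra. Qed.

Lemma dot_pos X v : nz X v -> 0 < dot X v v.
Proof. intros [z [Hz Hv]]. pose proof (sq_le_dot X v z Hz).
  assert (0 < v z * v z) by (apply Rsqr_pos_lt; auto). lra. Qed.

Lemma dot_zero X v : dot X v v = 0 -> forall x, In x X -> v x = 0.
Proof. intros H x Hx. destruct (Req_dec (v x) 0); auto.
  assert (0 < dot X v v) by (apply dot_pos; exists x; auto). lra. Qed.

Lemma dot_ext X u u' v v' : (forall x, In x X -> u x = u' x) -> (forall x, In x X -> v x = v' x) ->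
  dot X u v = dot X u' v'.
Proof. intros. apply sumX_ext; intros. rewrite H, H0; auto. Qed.

Lemma app_ext X M u u' x : (forall z, In z X -> u z = u' z) -> app X M u x = app X M u' x.
Proof. intros. apply sumX_ext; intros. rewrite H; auto. Qed.

Lemma qf_ext X M u u' : (forall z, In z X -> u z = u' z) -> qf X M u = qf X M u'.
Proof. intros. unfold qf. apply dot_ext; auto. intros; apply app_ext; auto. Qed.

Lemma dot_sym_app X M u w : symX X M -> dot X u (app X M w) = dot X (app X M u) w.
Proof. intros Hs. unfold dot, app.
  transitivity (sumX X (fun x => sumX X (fun z => u x * M x z * w z))).
  { apply sumX_ext; intros. rewrite <- sumX_scal. apply sumX_ext; intros; ring. }
  rewrite sumX_swap. apply sumX_ext; intros z Hz. rewrite <- sumX_scal_r. apply sumX_ext; intros x Hx.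
  rewrite (Hs x z) by auto. ring. Qed.

Lemma qf_eig X M u mu : (forall x, In x X -> app X M u x = mu * u x) -> qf X M u = mu * dot X u u.
Proof. intros H. unfold qf, dot. rewrite <- sumX_scal. apply sumX_ext; intros. rewrite H; auto; ring. Qed.

Lemma top_bound X M lam u mu : top X M lam -> nz X u ->
  (forall x, In x X -> app X M u x = mu * u x) -> mu <= lam.
Proof. intros [_ Ht] Hnz He. pose proof (Ht u). rewrite (qf_eig X M u mu He) in H.
  pose proof (dot_pos X u Hnz). apply Rmult_le_reg_r with (dot X u u); auto. Qed.

Lemma dot_scal X c v : dot X (fun x => c * v x) (fun x => c * v x) = c * c * dot X v v.
Proof. unfold dot. rewrite <- sumX_scal. apply sumX_ext; intros; ring. Qed.

Lemma app_scal X M c v x : app X M (fun z => c * v z) x = c * app X M v x.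
Proof. unfold app. rewrite <- sumX_scal. apply sumX_ext; intros; ring. Qed.

Lemma qf_scal X M c v : qf X M (fun x => c * v x) = c * c * qf X M v.
Proof. unfold qf, dot. rewrite <- sumX_scal. apply sumX_ext; intros.
  rewrite app_scal. ring. Qed.

Lemma qf_zero X M v : (forall x, In x X -> v x = 0) -> qf X M v = 0.
Proof. intros H. unfold qf, dot. apply sumX_zero. intros. rewrite H; auto; ring. Qed.

Lemma app_negM X M u x : app X (negM M) u x = - app X M u x.
Proof. unfold app, negM. replace (- sumX X (fun z => M x z * u z)) with (-1 * sumX X (fun z => M x z * u z)) by ring.
  rewrite <- sumX_scal. apply sumX_ext; intros; ring. Qed.

Lemma qf_negM X M v : qf X (negM M) v = - qf X M v.
Proof. unfold qf, dot. replace (- sumX X (fun x => v x * app X M v x)) with (-1 * sumX X (fun x => v x * app X M v x)) by ring.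
  rewrite <- sumX_scal. apply sumX_ext; intros.
  rewrite app_negM; ring. Qed.

Lemma sum_ev_l X y g : NoDup X -> In y X -> sumX X (fun x => ev y x * g x) = g y.
Proof. intros. rewrite <- (sumX_delta X y g) by auto. apply sumX_ext; intros. unfold ev.
  destruct (sdec x y); ring. Qed.

Lemma sum_ev_r X y g : NoDup X -> In y X -> sumX X (fun x => g x * ev y x) = g y.
Proof. intros. rewrite <- (sum_ev_l X y g) by auto. apply sumX_ext; intros; ring. Qed.

Lemma app_ev X M y x : NoDup X -> In y X -> app X M (ev y) x = M x y.
Proof. intros; unfold app; apply sum_ev_r; auto. Qed.

Lemma qf_ev X M y : NoDup X -> In y X -> qf X M (ev y) = M y y.
Proof. intros. unfold qf, dot. rewrite sum_ev_l by auto. apply app_ev; auto. Qed.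

Lemma dot_ev X y : NoDup X -> In y X -> dot X (ev y) (ev y) = 1.
Proof. intros. unfold dot. rewrite sum_ev_l by auto. unfold ev. destruct (sdec y y); congruence. Qed.

Lemma abs_prod_le a b : Rabs a * Rabs b <= (a * a + b * b) / 2.
Proof. pose proof (Rabs_pos a). pose proof (Rabs_pos b).
  assert (a * a = Rabs a * Rabs a) by (pose proof (Rsqr_abs a); unfold Rsqr in *; lra).
  assert (b * b = Rabs b * Rabs b) by (pose proof (Rsqr_abs b); unfold Rsqr in *; lra).
  rewrite H1, H2. pose proof (Rle_0_sqr (Rabs a - Rabs b)). unfold Rsqr in *. lra. Qed.

Lemma qf_abs_bound X M v :
  Rabs (qf X M v) <= sumX X (fun x => Rabs (v x) * sumX X (fun z => Rabs (M x z) * Rabs (v z))).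
Proof. unfold qf, dot, app. eapply Rle_trans; [apply sumX_abs|]. apply sumX_le; intros.
  rewrite Rabs_mult. apply Rmult_le_compat_l; [apply Rabs_pos|]. eapply Rle_trans; [apply sumX_abs|].
  apply sumX_le; intros. rewrite Rabs_mult; lra. Qed.

Lemma qf_bound X M : exists K, forall v, qf X M v <= K * dot X v v.
Proof. exists (sumX X (fun x => sumX X (fun z => Rabs (M x z)))). intros v.
  eapply Rle_trans; [apply Rle_abs|]. eapply Rle_trans; [apply qf_abs_bound|].
  rewrite <- sumX_scal_r. apply sumX_le; intros x Hx. rewrite <- sumX_scal_r, <- sumX_scal.
  apply sumX_le; intros z Hz.
  pose proof (abs_prod_le (v x) (v z)). pose proof (sq_le_dot X v x Hx). pose proof (sq_le_dot X v z Hz).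
  pose proof (Rabs_pos (M x z)).
  assert (Rabs (v x) * Rabs (v z) <= dot X v v) by lra.
  replace (Rabs (v x) * (Rabs (M x z) * Rabs (v z))) with (Rabs (M x z) * (Rabs (v x) * Rabs (v z))) by ring.
  apply Rmult_le_compat_l; auto. Qed.

Lemma cauchy_schwarz X f g : sumX X (fun x => f x * g x) * sumX X (fun x => f x * g x) <= dot X f f * dot X g g.
Proof. set (C := sumX X (fun x => f x * g x)). set (A := dot X f f). set (B := dot X g g).
  assert (HA : 0 <= A) by apply dot_nonneg. assert (HB : 0 <= B) by apply dot_nonneg.
  destruct (Req_dec A 0) as [H0|H0].
  - assert (C = 0). { unfold C. apply sumX_zero. intros. rewrite (dot_zero X f H0 x); auto; ring. }
    rewrite H, H0. lra.
  - set (t := C / A).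
    assert (0 <= sumX X (fun x => (t * f x - g x) * (t * f x - g x))) by (apply sumX_nonneg; intros; apply Rle_0_sqr).
    assert (sumX X (fun x => (t * f x - g x) * (t * f x - g x)) = t * t * A - 2 * t * C + B).
    { unfold A, B, C, dot. rewrite <- !sumX_scal. rewrite <- sumX_sub, <- sumX_add. apply sumX_ext; intros; ring. }
    assert (t * t * A - 2 * t * C + B = B - C * C / A) by (unfold t; field; auto).
    assert (0 < A) by lra.
    assert (0 <= B - C * C / A) by lra.
    assert (C * C / A * A = C * C) by (field; auto).
    nra. Qed.


Ltac inl := solve [left; reflexivity | right; assumption | assumption | simpl; auto].

Lemma symX_tail a X M : symX (a :: X) M -> symX X M.
Proof. intros H x y Hx Hy. apply H; right; auto. Qed.

Lemma qf_cons a X M v : symX (a :: X) M ->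
  qf (a :: X) M v = M a a * (v a * v a) + 2 * v a * sumX X (fun z => M a z * v z) + qf X M v.
Proof. intros Hs. unfold qf, dot, app. rewrite sumX_cons. rewrite sumX_cons.
  transitivity (v a * (M a a * v a + sumX X (fun z => M a z * v z)) +
     (sumX X (fun x => v a * (M a x * v x)) + sumX X (fun x => v x * sumX X (fun z => M x z * v z)))).
  { f_equal. rewrite <- sumX_add. apply sumX_ext; intros. rewrite sumX_cons.
    rewrite (Hs x a) by inl. ring. }
  rewrite sumX_scal. ring. Qed.

Lemma qf_cons_ext a X M t v : ~ In a X -> symX (a :: X) M ->
  qf (a :: X) M (ext a t v) = M a a * (t * t) + 2 * t * sumX X (fun z => M a z * v z) + qf X M v.
Proof. intros Hn Hs. rewrite qf_cons by auto.
  assert (Ha : ext a t v a = t) by (unfold ext; destruct (sdec a a); congruence). rewrite Ha.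
  assert (Hin : forall z, In z X -> ext a t v z = v z).
  { intros z Hz. unfold ext. destruct (sdec z a); [subst; contradiction|auto]. }
  rewrite (qf_ext X M (ext a t v) v Hin).
  rewrite (sumX_ext X (fun z => M a z * ext a t v z) (fun z => M a z * v z)); auto.
  intros; rewrite Hin; auto. Qed.

Lemma dichotomy : forall X, NoDup X -> forall P, symX X P -> (forall v, 0 <= qf X P v) ->
  (exists w, nz X w /\ forall x, In x X -> app X P w x = 0) \/
  (exists c, 0 < c /\ forall v, c * dot X v v <= qf X P v).
Proof.
  induction X as [|a X IH]; intros Hnd P Hs Hpsd.
  { right. exists 1. split; [lra|]. intros v. unfold qf, dot. rewrite !sumX_nil. lra. }
  inversion Hnd as [|? ? Hna HndX]; subst.
  assert (HsX : symX X P) by (eapply symX_tail; eauto).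
  assert (Hpaa : 0 <= P a a).
  { pose proof (Hpsd (ext a 1 (fun _ => 0))) as H. rewrite qf_cons_ext in H by auto.
    rewrite qf_zero in H by auto. rewrite sumX_zero in H by (intros; ring). lra. }
  destruct (Req_dec (P a a) 0) as [H0|H0].
  - left. exists (ev a). split.
    { exists a. split; [left; auto|]. unfold ev. destruct (sdec a a); [lra|congruence]. }
    intros x Hx. rewrite app_ev by (auto; inl).
    destruct Hx as [<-|Hx]; auto.
    rewrite (Hs x a) by inl.
    destruct (Req_dec (P a x) 0) as [|Hne]; auto. exfalso.
    set (t := - (P x x + 1) / (2 * P a x)).
    pose proof (Hpsd (ext a t (ev x))) as H. rewrite qf_cons_ext in H by auto.
    rewrite qf_ev in H by auto. rewrite sum_ev_r in H by auto. rewrite H0 in H.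
    assert (2 * t * P a x = - (P x x + 1)) by (unfold t; field; auto). lra.
  - assert (Hp : 0 < P a a) by lra.
    set (b := fun v : simplex -> R => sumX X (fun z => P a z * v z)).
    set (P' := fun x y => P x y - P x a * P a y / P a a).
    assert (HsP' : symX X P').
    { intros x y Hx Hy. unfold P'. rewrite (HsX x y) by auto.
      rewrite (Hs x a), (Hs a y) by inl. field; auto. }
    assert (Happ' : forall v x, app X P' v x = app X P v x - P x a * b v / P a a).
    { intros v x. unfold app, P', b.
      transitivity (sumX X (fun z => P x z * v z) - P x a / P a a * sumX X (fun z => P a z * v z)).
      { rewrite <- sumX_scal, <- sumX_sub. apply sumX_ext; intros. field; auto. }
      field; auto. }
    assert (Hqf' : forall v, qf X P' v = qf X P v - b v * b v / P a a).
    { intros v. unfold qf at 1, dot. rewrite (sumX_ext X _ (fun x => v x * app X P v x - b v / P a a * (P a x * v x))).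
      2:{ intros. rewrite Happ'. rewrite (Hs x a) by inl. field; auto. }
      rewrite sumX_sub, sumX_scal. fold (dot X v (app X P v)). fold (qf X P v). unfold b at 3. field; auto. }
    assert (Hpsd' : forall v, 0 <= qf X P' v).
    { intros v. pose proof (Hpsd (ext a (- b v / P a a) v)) as H. rewrite qf_cons_ext in H by auto.
      rewrite Hqf'. fold (b v) in H.
      replace (P a a * (- b v / P a a * (- b v / P a a)) + 2 * (- b v / P a a) * b v + qf X P v)
        with (qf X P v - b v * b v / P a a) in H by (field; auto). lra. }
    destruct (IH HndX P' HsP' Hpsd') as [[w [Hnzw Hw]]|[c' [Hc' Hc]]].
    + left. exists (ext a (- b w / P a a) w). split.
      { destruct Hnzw as [z [Hz Hwz]]. exists z. split; [right; auto|]. unfold ext.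
        destruct (sdec z a); [subst; contradiction|auto]. }
      intros x Hx. unfold app. rewrite sumX_cons. unfold ext at 1. destruct (sdec a a); [|congruence].
      rewrite (sumX_ext X _ (fun z => P x z * w z)).
      2:{ intros z Hz. unfold ext. destruct (sdec z a); [subst; contradiction|auto]. }
      fold (app X P w x). destruct Hx as [<-|Hx].
      * unfold app at 1. fold (b w). field; auto.
      * pose proof (Hw x Hx) as H. rewrite Happ' in H. lra.
    + set (beta2 := dot X (fun z => P a z) (fun z => P a z)).
      set (gam := 1 + 2 * beta2 / (P a a * P a a)).
      assert (Hb2 : 0 <= beta2) by apply dot_nonneg.
      assert (Hgam : 1 <= gam) by (unfold gam; assert (0 <= 2 * beta2 / (P a a * P a a)) by
        (apply Rmult_le_pos; [lra| left; apply Rinv_0_lt_compat; nra]); lra).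
      set (c := Rmin (P a a / 2) (c' / gam)).
      assert (Hc1 : c <= P a a / 2) by apply Rmin_l.
      assert (Hc2 : c * gam <= c') by (assert (c <= c' / gam) by apply Rmin_r;
        apply Rmult_le_compat_r with (r := gam) in H; [|lra]; replace (c' / gam * gam) with c' in H by (field; lra); lra).
      assert (Hcp : 0 < c) by (unfold c; apply Rmin_glb_lt; [lra|apply Rdiv_lt_0_compat; lra]).
      right. exists c. split; auto. intros v.
      rewrite qf_cons by auto. fold (b v).
      assert (Hq := Hqf' v). pose proof (Hc v).
      assert (Hcs : b v * b v <= beta2 * dot X v v) by (apply cauchy_schwarz).
      assert (Hdot : dot (a :: X) v v = v a * v a + dot X v v) by reflexivity.
      rewrite Hdot.
      set (t := v a). set (bb := b v). set (D := dot X v v). fold t in Hdot.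
      assert (HD : 0 <= D) by apply dot_nonneg.
      set (s := t + bb / P a a).
      assert (E1 : P a a * (t * t) + 2 * t * bb + bb * bb / P a a = P a a * (s * s)) by (unfold s; field; lra).
      assert (E2 : t * t <= 2 * (s * s) + 2 * (bb / P a a * (bb / P a a))).
      { replace t with (s - bb / P a a) by (unfold s; ring). pose proof (Rle_0_sqr (s + bb / P a a)). unfold Rsqr in *. nra. }
      assert (E3 : bb / P a a * (bb / P a a) <= beta2 * D / (P a a * P a a)).
      { replace (bb / P a a * (bb / P a a)) with (bb * bb / (P a a * P a a)) by (field; lra).
        unfold Rdiv. apply Rmult_le_compat_r; [left; apply Rinv_0_lt_compat; nra|]. auto. }
      assert (E4 : c * (t * t) <= 2 * c * (s * s) + c * (gam - 1) * D).
      { replace (c * (gam - 1) * D) with (2 * c * (beta2 * D / (P a a * P a a))) by (unfold gam; field; lra). nra. }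
      assert (E5 : 2 * c * (s * s) <= P a a * (s * s)) by (pose proof (Rle_0_sqr s); unfold Rsqr in *; nra).
      assert (E6 : c * gam * D <= c' * D) by nra.
      change (b v) with bb in Hq. change (dot X v v) with D in H. lra.
Qed.

Definition idm (lam : R) (M : Mat) : Mat := fun x y => (if sdec x y then lam else 0) - M x y.

Lemma app_idm X lam M v x : NoDup X -> In x X -> app X (idm lam M) v x = lam * v x - app X M v x.
Proof. intros. unfold app, idm.
  rewrite (sumX_ext X _ (fun z => (if sdec x z then lam * v z else 0) - M x z * v z)).
  2:{ intros; destruct (sdec x x0); ring. }
  rewrite sumX_sub. rewrite sumX_delta' by auto. reflexivity. Qed.

Lemma rayleigh X M : NoDup X -> X <> [] -> symX X M -> exists lam, top X M lam.
Proof.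
  intros Hnd Hne Hs. destruct (qf_bound X M) as [K HK].
  set (S := fun q => exists v, dot X v v = 1 /\ q = qf X M v).
  assert (Hb : bound S). { exists K. intros q [v [Hv ->]]. pose proof (HK v). rewrite Hv in H. lra. }
  destruct X as [|x0 X']; [congruence|]. set (X := x0 :: X') in *.
  assert (Hx0 : In x0 X) by (left; auto).
  assert (Hex : exists q, S q) by (exists (qf X M (ev x0)); exists (ev x0); split; auto; apply dot_ev; auto).
  destruct (completeness S Hb Hex) as [lam [Hub Hlub]].
  assert (H1 : forall v, qf X M v <= lam * dot X v v).
  { intros v. destruct (Req_dec (dot X v v) 0) as [Hd|Hd].
    - rewrite qf_zero; [rewrite Hd; lra|]. apply dot_zero; auto.
    - assert (Hdp : 0 < dot X v v) by (pose proof (dot_nonneg X v); lra).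
      set (c := / sqrt (dot X v v)).
      assert (Hc2 : c * c * dot X v v = 1).
      { unfold c. rewrite <- Rinv_mult. rewrite sqrt_sqrt by lra. field. lra. }
      assert (HS : S (qf X M (fun x => c * v x))).
      { exists (fun x => c * v x). split; auto. rewrite dot_scal; auto. }
      pose proof (Hub _ HS). rewrite qf_scal in H.
      assert (c * c = / dot X v v) by (apply (Rmult_eq_reg_r (dot X v v)); [rewrite Hc2; field|]; lra).
      rewrite H0 in H. apply (Rmult_le_compat_r (dot X v v)) in H; [|lra].
      replace (/ dot X v v * qf X M v * dot X v v) with (qf X M v) in H by (field; lra). lra. }
  exists lam. split; auto.
  assert (HsP : symX X (idm lam M)).
  { intros x y Hx Hy. unfold idm. rewrite (Hs x y) by auto. destruct (sdec x y), (sdec y x); subst; congruence || ring. }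
  assert (HqP : forall v, qf X (idm lam M) v = lam * dot X v v - qf X M v).
  { intros v. unfold qf at 1, dot at 1. rewrite (sumX_ext X _ (fun x => lam * (v x * v x) - v x * app X M v x)).
    2:{ intros. rewrite app_idm by auto. ring. }
    rewrite sumX_sub, sumX_scal. reflexivity. }
  destruct (dichotomy X Hnd (idm lam M) HsP) as [[w [Hw Hw0]]|[c [Hc Hcq]]].
  { intros v. rewrite HqP. pose proof (H1 v). lra. }
  - exists w. split; auto. intros x Hx. pose proof (Hw0 x Hx). rewrite app_idm in H by auto. lra.
  - exfalso. assert (lam <= lam - c); [|lra]. apply Hlub. intros q [v [Hv ->]].
    pose proof (Hcq v). rewrite HqP, Hv in H. lra.
Qed.

Lemma spec_rad X M l1 l2 : symX X M -> top X M l1 -> top X (negM M) l2 ->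
  spectral_radius X M (Rmax l1 l2).
Proof.
  intros Hs T1 T2.
  assert (Hsum : 0 <= l1 + l2).
  { destruct T1 as [[u [Hu Hue]] Hq1]. destruct T2 as [_ Hq2]. pose proof (Hq1 u). pose proof (Hq2 u).
    rewrite qf_negM in H0. pose proof (dot_pos X u Hu). nra. }
  split.
  - destruct (Rle_dec l2 l1).
    + rewrite Rmax_left by lra. destruct T1 as [[u [Hu Hue]] _]. exists l1, 0. split.
      * exists u, (fun _ => 0). split. { destruct Hu as [z [Hz Hz']]. exists z; auto. }
        intros x Hx. split.
        -- unfold sumX. change (app X M u x = l1 * u x - 0 * 0). rewrite Hue; auto; ring.
        -- change (app X M (fun _ => 0) x = 0 * u x + l1 * 0). unfold app. rewrite sumX_zero; [ring|]. intros; ring.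
      * replace (l1 * l1 + 0 * 0) with (l1 * l1) by ring. apply sqrt_square. lra.
    + rewrite Rmax_right by lra. destruct T2 as [[u [Hu Hue]] _]. exists (- l2), 0. split.
      * exists u, (fun _ => 0). split. { destruct Hu as [z [Hz Hz']]. exists z; auto. }
        intros x Hx. split.
        -- change (app X M u x = - l2 * u x - 0 * 0). pose proof (Hue x Hx). rewrite app_negM in H. lra.
        -- change (app X M (fun _ => 0) x = 0 * u x + - l2 * 0). unfold app. rewrite sumX_zero; [ring|]. intros; ring.
      * replace (- l2 * - l2 + 0 * 0) with (l2 * l2) by ring. apply sqrt_square. lra.
  - intros a b [u [v [Hnz He]]].
    assert (Hu : forall x, In x X -> app X M u x = a * u x - b * v x) by (intros; apply He; auto).
    assert (Hv : forall x, In x X -> app X M v x = b * u x + a * v x) by (intros; apply He; auto).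
    assert (Hb : b = 0).
    { pose proof (dot_sym_app X M v u Hs).
      rewrite (dot_ext X v v _ (fun x => a * u x - b * v x)) in H by auto.
      rewrite (dot_ext X (app X M v) (fun x => b * u x + a * v x) u u) in H by auto.
      assert (E1 : dot X v (fun x => a * u x - b * v x) = a * dot X u v - b * dot X v v)
        by (unfold dot; rewrite <- !sumX_scal, <- sumX_sub; apply sumX_ext; intros; ring).
      assert (E2 : dot X (fun x => b * u x + a * v x) u = b * dot X u u + a * dot X u v)
        by (unfold dot; rewrite <- !sumX_scal, <- sumX_add; apply sumX_ext; intros; ring).
      rewrite E1, E2 in H.
      assert (0 < dot X u u + dot X v v).
      { destruct Hnz as [z [Hz [Hz'|Hz']]].
        - pose proof (dot_pos X u (ex_intro _ z (conj Hz Hz'))). pose proof (dot_nonneg X v). lra.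
        - pose proof (dot_pos X v (ex_intro _ z (conj Hz Hz'))). pose proof (dot_nonneg X u). lra. }
      nra. }
    subst b. replace (a * a + 0 * 0) with (Rsqr a) by (unfold Rsqr; ring). rewrite sqrt_Rsqr_abs.
    assert (exists w, nz X w /\ forall x, In x X -> app X M w x = a * w x) as [w [Hw Hwe]].
    { destruct Hnz as [z [Hz [Hz'|Hz']]].
      - exists u. split; [exists z; auto|]. intros. rewrite Hu; auto; ring.
      - exists v. split; [exists z; auto|]. intros. rewrite Hv; auto; ring. }
    pose proof (top_bound X M l1 w a T1 Hw Hwe).
    assert (forall x, In x X -> app X (negM M) w x = - a * w x) by (intros; rewrite app_negM, Hwe; auto; ring).
    pose proof (top_bound X (negM M) l2 w (- a) T2 Hw H0).
    unfold Rabs. destruct (Rcase_abs a); [apply Rle_trans with l2; [lra|apply Rmax_r]|apply Rle_trans with l1; [lra|apply Rmax_l]].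
Qed.


Ltac eqbs := repeat match goal with
  | |- context [Nat.eqb ?p ?q] => destruct (Nat.eqb_spec p q)
  | H : context [Nat.eqb ?p ?q] |- _ => destruct (Nat.eqb_spec p q)
  end; subst; simpl in *.

Lemma in_simplices n adj x : In x (simplices n adj) <->
  (exists c, x = SV c /\ (c < n)%nat) \/
  (exists a b, x = SE a b /\ (a < b)%nat /\ (b < n)%nat /\ adj a b = true).
Proof.
  unfold simplices. rewrite in_app_iff, in_map_iff, in_flat_map. split.
  - intros [[c [<- Hc]]|[i [Hi Hj]]].
    + left. exists c. rewrite in_seq in Hc. split; auto; lia.
    + right. rewrite in_flat_map in Hj. destruct Hj as [j [Hj Hx]]. rewrite in_seq in Hi, Hj.
      destruct (adj i j) eqn:E; [|destruct Hx]. destruct Hx as [<-|[]].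
      exists i, j. repeat split; auto; lia.
  - intros [[c [-> Hc]]|[a [b [-> [Hab [Hb Hadj]]]]]].
    + left. exists c. split; auto. rewrite in_seq; lia.
    + right. exists a. split; [rewrite in_seq; lia|]. rewrite in_flat_map. exists b.
      split; [rewrite in_seq; lia|]. rewrite Hadj. left; auto.
Qed.

Lemma NoDup_flat_map {A B : Type} (f : A -> list B) (l : list A) :
  NoDup l -> (forall x, In x l -> NoDup (f x)) ->
  (forall x y z, In x l -> In y l -> In z (f x) -> In z (f y) -> x = y) ->
  NoDup (flat_map f l).
Proof.
  induction l as [|a l IH]; intros Hnd Hf Hd; simpl; [constructor|].
  inversion Hnd; subst. apply NoDup_app.
  - apply Hf; left; auto.
  - apply IH; auto. intros; apply Hf; right; auto. intros x y z Hx Hy; apply Hd; right; auto.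
  - intros z Hz Hz'. rewrite in_flat_map in Hz'. destruct Hz' as [y [Hy Hzy]].
    assert (a = y) by (apply (Hd a y z); auto; [left; auto|right; auto]). subst. contradiction.
Qed.

Lemma NoDup_simplices n adj : NoDup (simplices n adj).
Proof.
  unfold simplices. apply NoDup_app.
  - apply NoDup_map_NoDup_ForallPairs; [intros ? ? _ _ H; inversion H; auto|apply seq_NoDup].
  - apply NoDup_flat_map; [apply seq_NoDup| |].
    + intros i _. apply NoDup_flat_map; [apply seq_NoDup| |].
      * intros j _. destruct (adj i j); repeat constructor; simpl; tauto.
      * intros j j' z _ _ H1 H2. destruct (adj i j); [|destruct H1]. destruct (adj i j'); [|destruct H2].
        destruct H1 as [<-|[]]. destruct H2 as [H2|[]]. inversion H2; auto.
    + intros i i' z _ _ H1 H2. rewrite in_flat_map in H1, H2.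
      destruct H1 as [j [_ H1]]. destruct H2 as [j' [_ H2]].
      destruct (adj i j); [|destruct H1]. destruct (adj i' j'); [|destruct H2].
      destruct H1 as [<-|[]]. destruct H2 as [H2|[]]. inversion H2; auto.
  - intros z Hz Hz'. rewrite in_map_iff in Hz. destruct Hz as [c [<- _]].
    rewrite in_flat_map in Hz'. destruct Hz' as [i [_ H]]. rewrite in_flat_map in H.
    destruct H as [j [_ H]]. destruct (adj i j); [|destruct H]. destruct H as [H|[]]. discriminate.
Qed.

Definition Da : Mat := fun x y => absdmat x y + absdmat y x.
Definition Am : Mat := fun x y => if cg_adj x y then 1 else 0.

Lemma cg_adj_sym x y : cg_adj x y = cg_adj y x.
Proof. destruct x, y; unfold cg_adj, simplex_eqb, meets; eqbs; auto; try lia;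
  repeat rewrite ?orb_true_r, ?orb_false_r, ?andb_false_r; auto. Qed.

Definition vadd (u v : simplex -> R) := fun x => u x + v x.
Definition vsub (u v : simplex -> R) := fun x => u x - v x.
Definition vscal (c : R) (u : simplex -> R) := fun x => c * u x.
Definition vzero : simplex -> R := fun _ => 0.
Definition Ev (u : simplex -> R) := fun x => match x with SV _ => 0 | SE _ _ => u x end.
Definition Vv (u : simplex -> R) := fun x => match x with SV _ => u x | SE _ _ => 0 end.
Definition Kop X u := app X Da u.

Lemma Kop_vadd X u v : Kop X (vadd u v) = vadd (Kop X u) (Kop X v).
Proof. apply functional_extensionality; intros x. unfold Kop, app, vadd. rewrite <- sumX_add.
  apply sumX_ext; intros; ring. Qed.
Lemma Kop_vsub X u v : Kop X (vsub u v) = vsub (Kop X u) (Kop X v).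
Proof. apply functional_extensionality; intros x. unfold Kop, app, vsub. rewrite <- sumX_sub.
  apply sumX_ext; intros; ring. Qed.
Lemma Kop_vscal X c u : Kop X (vscal c u) = vscal c (Kop X u).
Proof. apply functional_extensionality; intros x. unfold Kop, app, vscal. rewrite <- sumX_scal.
  apply sumX_ext; intros; ring. Qed.
Lemma Kop_zero X : Kop X vzero = vzero.
Proof. apply functional_extensionality; intros x. unfold Kop, app, vzero. apply sumX_zero; intros; ring. Qed.
Lemma Ev_vadd u v : Ev (vadd u v) = vadd (Ev u) (Ev v).
Proof. apply functional_extensionality; intros []; unfold Ev, vadd; simpl; ring. Qed.
Lemma Ev_vsub u v : Ev (vsub u v) = vsub (Ev u) (Ev v).
Proof. apply functional_extensionality; intros []; unfold Ev, vsub; simpl; ring. Qed.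
Lemma Ev_vscal c u : Ev (vscal c u) = vscal c (Ev u).
Proof. apply functional_extensionality; intros []; unfold Ev, vscal; simpl; ring. Qed.
Lemma Vv_vadd u v : Vv (vadd u v) = vadd (Vv u) (Vv v).
Proof. apply functional_extensionality; intros []; unfold Vv, vadd; simpl; ring. Qed.
Lemma Vv_vsub u v : Vv (vsub u v) = vsub (Vv u) (Vv v).
Proof. apply functional_extensionality; intros []; unfold Vv, vsub; simpl; ring. Qed.
Lemma Vv_vscal c u : Vv (vscal c u) = vscal c (Vv u).
Proof. apply functional_extensionality; intros []; unfold Vv, vscal; simpl; ring. Qed.
Lemma Ev_Ev u : Ev (Ev u) = Ev u.
Proof. apply functional_extensionality; intros []; reflexivity. Qed.
Lemma Vv_Vv u : Vv (Vv u) = Vv u.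
Proof. apply functional_extensionality; intros []; reflexivity. Qed.
Lemma Ev_Vv u : Ev (Vv u) = vzero.
Proof. apply functional_extensionality; intros []; reflexivity. Qed.
Lemma Vv_Ev u : Vv (Ev u) = vzero.
Proof. apply functional_extensionality; intros []; reflexivity. Qed.
Lemma Ev_zero : Ev vzero = vzero.
Proof. apply functional_extensionality; intros []; reflexivity. Qed.
Lemma Vv_zero : Vv vzero = vzero.
Proof. apply functional_extensionality; intros []; reflexivity. Qed.
Lemma EV_split u : u = vadd (Ev u) (Vv u).
Proof. apply functional_extensionality; intros []; unfold vadd; simpl; ring. Qed.

Lemma Ev_Kop X u : Ev (Kop X u) = Kop X (Vv u).
Proof. apply functional_extensionality; intros x. unfold Ev, Kop, app.
  destruct x as [c|a b].
  - symmetry. apply sumX_zero. intros [c'|a' b'] _; unfold Da, absdmat; simpl; ring.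
  - apply sumX_ext. intros [c'|a' b'] _; unfold Da, absdmat; simpl; ring. Qed.

Lemma Vv_Kop X u : Vv (Kop X u) = Kop X (Ev u).
Proof. apply functional_extensionality; intros x. unfold Vv, Kop, app.
  destruct x as [c|a b].
  - apply sumX_ext. intros [c'|a' b'] _; unfold Da, absdmat; simpl; ring.
  - symmetry. apply sumX_zero. intros [c'|a' b'] _; unfold Da, absdmat; simpl; ring. Qed.

Definition Lop X u := vsub (vadd (vadd u (Kop X u)) (Kop X (Kop X (Ev u)))) (vscal 2 (Ev u)).

Ltac normK Hp1 Hp2 Hq1 Hq2 :=
  repeat progress (rewrite ?Kop_vadd, ?Kop_vsub, ?Kop_vscal, ?Kop_zero, ?Ev_zero, ?Vv_zero, ?Ev_vadd, ?Ev_vsub, ?Ev_vscal,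
     ?Vv_vadd, ?Vv_vsub, ?Vv_vscal, ?Ev_Kop, ?Vv_Kop, ?Hp1, ?Hp2, ?Hq1, ?Hq2).

Lemma split_gen (P : (simplex -> R) -> Prop) :
  (forall p q, Ev p = p -> Vv p = vzero -> Ev q = vzero -> Vv q = q -> P (vadd p q)) -> forall u, P u.
Proof. intros H u. rewrite (EV_split u). apply H. apply Ev_Ev. apply Vv_Ev. apply Ev_Vv. apply Vv_Vv. Qed.

Lemma LL X u : vsub (Lop X (Lop X u)) u = Kop X (Kop X (Lop X u)).
Proof. revert u. apply split_gen. intros p q Hp1 Hp2 Hq1 Hq2. unfold Lop.
  normK Hp1 Hp2 Hq1 Hq2. apply functional_extensionality; intros x.
  unfold vadd, vsub, vscal, vzero. lra. Qed.

Lemma LK X u : Kop X (Kop X (Lop X u)) = Lop X (Kop X (Kop X u)).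
Proof. revert u. apply split_gen. intros p q Hp1 Hp2 Hq1 Hq2. unfold Lop.
  normK Hp1 Hp2 Hq1 Hq2. apply functional_extensionality; intros x.
  unfold vadd, vsub, vscal, vzero. lra. Qed.

Lemma Lop_vscal X c u : Lop X (vscal c u) = vscal c (Lop X u).
Proof. unfold Lop. rewrite ?Kop_vadd, ?Kop_vsub, ?Kop_vscal, ?Ev_vscal, ?Kop_vscal.
  apply functional_extensionality; intros x. unfold vadd, vsub, vscal. ring. Qed.

Lemma Lop_vsub X u v : Lop X (vsub u v) = vsub (Lop X u) (Lop X v).
Proof. unfold Lop. rewrite ?Ev_vsub, ?Kop_vsub.
  apply functional_extensionality; intros x. unfold vadd, vsub, vscal. ring. Qed.

Definition nsum (l : list nat) (g : nat -> R) := fold_right Rplus 0 (map g l).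

Lemma nsum_ext l g h : (forall c, g c = h c) -> nsum l g = nsum l h.
Proof. intros H; induction l; simpl; auto. unfold nsum in *; simpl; rewrite H, IHl; auto. Qed.
Lemma nsum_add l g h : nsum l (fun c => g c + h c) = nsum l g + nsum l h.
Proof. induction l; unfold nsum in *; simpl; [lra|]. rewrite IHl; lra. Qed.

Lemma nsum_delta m : forall s p w, nsum (seq s m) (fun c => (if Nat.eqb c p then 1 else 0) * w c) =
  if andb (Nat.leb s p) (Nat.ltb p (s + m)) then w p else 0.
Proof. induction m as [|m IH]; intros s p w.
  - unfold nsum; simpl. destruct (Nat.leb_spec s p), (Nat.ltb_spec p (s + 0)); simpl; auto; lia.
  - unfold nsum in *; simpl. rewrite IH.
    destruct (Nat.eqb_spec s p), (Nat.leb_spec s p), (Nat.ltb_spec p (s + S m)),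
      (Nat.leb_spec (S s) p), (Nat.ltb_spec p (S s + m)); simpl; subst; try lia; ring. Qed.

Lemma sumX_map_SV l g : sumX (map SV l) g = nsum l (fun c => g (SV c)).
Proof. induction l; [reflexivity|]. simpl map. rewrite sumX_cons, IHl. reflexivity. Qed.

Lemma count_edges n adj a b a' b' : (a < b < n)%nat -> (a' < b' < n)%nat ->
  sumX (simplices n adj) (fun y => Da (SE a b) y * Da y (SE a' b')) =
  Am (SE a b) (SE a' b') + 2 * (if sdec (SE a b) (SE a' b') then 1 else 0).
Proof.
  intros H1 H2. unfold simplices. rewrite sumX_app.
  rewrite (sumX_zero (flat_map _ _)).
  2:{ intros z Hz. rewrite in_flat_map in Hz. destruct Hz as [i [_ Hz]]. rewrite in_flat_map in Hz.
      destruct Hz as [j [_ Hz]]. destruct (adj i j); [|destruct Hz]. destruct Hz as [<-|[]].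
      unfold Da, absdmat. ring. }
  rewrite sumX_map_SV.
  set (iota := fun c => if orb (Nat.eqb c a') (Nat.eqb c b') then 1 else 0).
  rewrite (nsum_ext _ _ (fun c => (if Nat.eqb c a then 1 else 0) * iota c + (if Nat.eqb c b then 1 else 0) * iota c)).
  2:{ intros c. unfold Da, absdmat, iota. eqbs; try lia; ring. }
  rewrite nsum_add, !nsum_delta.
  destruct (Nat.leb_spec 0 a), (Nat.ltb_spec a (0 + n)), (Nat.leb_spec 0 b), (Nat.ltb_spec b (0 + n)); try lia.
  simpl andb. unfold iota, Am, cg_adj, simplex_eqb, meets.
  destruct (sdec (SE a b) (SE a' b')) as [E|E]; [inversion E; subst|];
  eqbs; try lia; try congruence; ring.
Qed.

Definition Lv X u := fun x => u x + app X Am u x.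

Lemma Kop_Kop_Ev_SV X u c : Kop X (Kop X (Ev u)) (SV c) = 0.
Proof. change (Kop X (Kop X (Ev u)) (SV c)) with (Vv (Kop X (Kop X (Ev u))) (SV c)).
  rewrite Vv_Kop, Ev_Kop, Vv_Ev, Kop_zero, Kop_zero. reflexivity. Qed.

Lemma A_char n adj u x : let X := simplices n adj in In x X ->
  app X Am u x = Kop X u x + Kop X (Kop X (Ev u)) x - 2 * Ev u x.
Proof.
  intros X Hx. pose proof (NoDup_simplices n adj) as Hnd. fold X in Hnd.
  destruct x as [c|a b].
  - rewrite Kop_Kop_Ev_SV. simpl Ev. unfold Kop, app.
    rewrite (sumX_ext X (fun z => Am (SV c) z * u z) (fun z => Da (SV c) z * u z)); [ring|].
    intros [c'|a' b'] _; unfold Am, Da, cg_adj, simplex_eqb, meets, absdmat; eqbs; ring.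
  - assert (Hab : (a < b < n)%nat).
    { apply in_simplices in Hx. destruct Hx as [[c [E _]]|[a0 [b0 [E [? [? _]]]]]]; inversion E; subst; lia. }
    set (Ae := fun z => match z with SV _ => 0 | SE _ _ => Am (SE a b) z end).
    assert (E1 : app X Am u (SE a b) = Kop X u (SE a b) + sumX X (fun z => Ae z * u z)).
    { unfold Kop, app. rewrite <- sumX_add. apply sumX_ext. intros [c'|a' b'] _;
      unfold Ae, Am, Da, cg_adj, simplex_eqb, meets, absdmat; eqbs; ring. }
    assert (E2 : Kop X (Kop X (Ev u)) (SE a b) = sumX X (fun z => Ae z * u z) + 2 * u (SE a b)).
    { unfold Kop, app.
      rewrite (sumX_ext X _ (fun y => sumX X (fun z => Da (SE a b) y * Da y z * Ev u z))).
      2:{ intros. rewrite <- sumX_scal. apply sumX_ext; intros; ring. }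
      rewrite sumX_swap.
      rewrite (sumX_ext X _ (fun z => Ae z * u z + 2 * (if sdec (SE a b) z then u z else 0))).
      { rewrite sumX_add, sumX_scal, sumX_delta' by auto. reflexivity. }
      intros z Hz. rewrite sumX_scal_r. destruct z as [c'|a' b'].
      - simpl Ev. destruct (sdec (SE a b) (SV c')) as [E|E]; [discriminate|]. simpl. ring.
      - assert (Hab' : (a' < b' < n)%nat).
        { apply in_simplices in Hz. destruct Hz as [[c [E _]]|[a0 [b0 [E [? [? _]]]]]]; inversion E; subst; lia. }
        unfold X. rewrite count_edges by auto. simpl Ev. unfold Ae.
        destruct (sdec (SE a b) (SE a' b')); ring. }
    rewrite E1, E2. simpl Ev. ring.
Qed.

Lemma Lv_char n adj u x : let X := simplices n adj in In x X -> Lv X u x = Lop X u x.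
Proof. intros X Hx. pose proof (A_char n adj u x Hx) as H. fold X in H.
  unfold Lv, Lop, vsub, vadd, vscal. rewrite H. ring. Qed.

Lemma Ha_app X u x : app X (abs_hodge X) u x = Kop X (Kop X u) x.
Proof. unfold Kop, app, abs_hodge, mat_mul, mat_add, transp.
  rewrite (sumX_ext X _ (fun y => sumX X (fun z => Da x z * Da z y * u y))).
  2:{ intros. rewrite <- sumX_scal_r. reflexivity. }
  rewrite sumX_swap. apply sumX_ext; intros. rewrite <- sumX_scal. apply sumX_ext; intros. unfold Da. ring. Qed.

Lemma Am_sym X : symX X Am.
Proof. intros x y _ _. unfold Am. rewrite cg_adj_sym. reflexivity. Qed.

Lemma Ha_sym X : symX X (abs_hodge X).
Proof. intros x y _ _. unfold abs_hodge, mat_mul, mat_add, transp. apply sumX_ext; intros; ring. Qed.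

Lemma Hs_sym X o : symX X (hodge X o).
Proof. intros x y _ _. unfold hodge, mat_mul, mat_add, transp. apply sumX_ext; intros; ring. Qed.

Lemma absd_nonneg x y : 0 <= absdmat x y.
Proof. destruct x, y; unfold absdmat; try lra. destruct (_ || _); lra. Qed.

Lemma dmat_abs o x y : Rabs (dmat o x y) <= absdmat x y.
Proof. destruct x as [|a b], y as [c|]; unfold dmat, absdmat; try (rewrite Rabs_R0; lra).
  destruct (o a b); eqbs; unfold Rabs; destruct (Rcase_abs _); lra. Qed.

Lemma Hs_abs X o x y : Rabs (hodge X o x y) <= abs_hodge X x y.
Proof. unfold hodge, abs_hodge, mat_mul, mat_add, transp.
  eapply Rle_trans; [apply sumX_abs|]. apply sumX_le; intros z _. rewrite Rabs_mult.
  pose proof (dmat_abs o x z). pose proof (dmat_abs o z x). pose proof (dmat_abs o z y). pose proof (dmat_abs o y z).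
  pose proof (Rabs_triang (dmat o x z) (dmat o z x)). pose proof (Rabs_triang (dmat o z y) (dmat o y z)).
  apply Rmult_le_compat; try apply Rabs_pos; lra. Qed.

Lemma Ha_nonneg X x y : 0 <= abs_hodge X x y.
Proof. unfold abs_hodge, mat_mul, mat_add, transp. apply sumX_nonneg; intros.
  pose proof (absd_nonneg x x0). pose proof (absd_nonneg x0 x). pose proof (absd_nonneg x0 y). pose proof (absd_nonneg y x0).
  nra. Qed.

Lemma Am_nonneg x y : 0 <= Am x y.
Proof. unfold Am. destruct (cg_adj x y); lra. Qed.


Lemma top_dom X M N l m : top X M l -> top X N m -> (forall x y, Rabs (M x y) <= N x y) -> l <= m.
Proof.
  intros [[u [Hu Hue]] _] [_ HN] Hd.
  set (au := fun x => Rabs (u x)).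
  assert (Hdd : dot X au au = dot X u u).
  { unfold dot, au. apply sumX_ext; intros. rewrite <- Rabs_mult. apply Rabs_right.
    pose proof (Rle_0_sqr (u x)); unfold Rsqr in *; lra. }
  assert (H1 : l * dot X u u <= qf X N au).
  { rewrite <- (qf_eig X M u l Hue). eapply Rle_trans; [apply Rle_abs|].
    eapply Rle_trans; [apply qf_abs_bound|]. unfold qf, dot, app. apply sumX_le; intros.
    apply Rmult_le_compat_l; [apply Rabs_pos|]. apply sumX_le; intros.
    apply Rmult_le_compat_r; [apply Rabs_pos|]. auto. }
  pose proof (HN au). rewrite Hdd in H. pose proof (dot_pos X u Hu).
  apply Rmult_le_reg_r with (dot X u u); auto. lra. Qed.

Lemma exists_max (X : list simplex) (f : simplex -> R) : X <> [] ->
  exists x0, In x0 X /\ forall x, In x X -> f x <= f x0.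
Proof.
  induction X as [|a X IH]; intros Hne; [congruence|].
  destruct X as [|b X'].
  - exists a. split; [left; auto|]. intros x [<-|[]]; lra.
  - destruct IH as [x1 [Hx1 Hm]]; [discriminate|].
    destruct (Rle_dec (f a) (f x1)).
    + exists x1. split; [right; auto|]. intros x [<-|Hx]; auto.
    + exists a. split; [left; auto|]. intros x [<-|Hx]; [lra|]. pose proof (Hm x Hx). lra.
Qed.

Lemma finv_mono x y : 1 <= x -> x <= y -> x - / x <= y - / y.
Proof. intros. assert (/ y <= / x) by (apply Rinv_le_contravar; lra). lra. Qed.

Lemma finv_lip x y : 1 <= x -> x <= y -> (y - / y) - (x - / x) <= 2 * (y - x).
Proof. intros. assert (/ x - / y = (y - x) / (x * y)) by (field; lra).
  assert ((y - x) / (x * y) <= y - x).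
  { unfold Rdiv. assert (0 < / (x * y) <= 1).
    { split; [apply Rinv_0_lt_compat; nra|]. rewrite <- Rinv_1. apply Rinv_le_contravar; nra. }
    nra. }
  lra. Qed.

Fixpoint iterA X k u := match k with O => u | S k => app X Am (iterA X k u) end.

Lemma INR_fold (l : list simplex) (f : simplex -> nat) :
  INR (fold_right Nat.add 0%nat (map f l)) = sumX l (fun y => INR (f y)).
Proof. induction l; [reflexivity|]. simpl. rewrite plus_INR, IHl. reflexivity. Qed.

Lemma walks_iter X k x : INR (walks X k x) = iterA X k (fun _ => 1) x.
Proof. revert x. induction k; intros x; [reflexivity|]. simpl walks. rewrite INR_fold.
  simpl iterA. unfold app. apply sumX_ext; intros. rewrite <- IHk. unfold Am.
  destruct (cg_adj x x0); simpl; ring. Qed.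

Lemma fmax_ge (l : list simplex) (f : simplex -> nat) x : In x l -> (f x <= fold_right Nat.max 0 (map f l))%nat.
Proof. induction l as [|a l IH]; intros Hx; [destruct Hx|]. simpl.
  destruct Hx as [<-|Hx]; [apply Nat.le_max_l|]. eapply Nat.le_trans; [apply IH; auto|apply Nat.le_max_r]. Qed.

Lemma fmax_cases (l : list simplex) (f : simplex -> nat) :
  fold_right Nat.max 0%nat (map f l) = 0%nat \/ exists x, In x l /\ fold_right Nat.max 0%nat (map f l) = f x.
Proof. induction l as [|a l IH]; [left; reflexivity|]. simpl.
  destruct (Nat.max_dec (f a) (fold_right Nat.max 0%nat (map f l))) as [E|E]; rewrite E.
  - right; exists a; split; [left|]; auto.
  - destruct IH as [H|[x [Hx H]]]; [left; auto|right; exists x; split; [right|]; auto]. Qed.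

Lemma Kop_ext X u v x : (forall z, In z X -> u z = v z) -> Kop X u x = Kop X v x.
Proof. intros; unfold Kop; apply app_ext; auto. Qed.

Lemma Lop_ext X u v : (forall z, In z X -> u z = v z) -> forall x, In x X -> Lop X u x = Lop X v x.
Proof. intros H x Hx. unfold Lop, vsub, vadd, vscal.
  assert (HE : forall z, In z X -> Ev u z = Ev v z) by (intros [] ?; simpl; auto).
  rewrite (Kop_ext X u v x H). rewrite (Kop_ext X (Kop X (Ev u)) (Kop X (Ev v)) x).
  2:{ intros; apply Kop_ext; auto. } rewrite H, HE; auto. Qed.

Lemma hydro_up n adj a eta : let X := simplices n adj in
  top X Am a -> top X (abs_hodge X) eta -> 0 <= a -> (1 + a) - / (1 + a) <= eta.
Proof.
  intros X Ta Th Ha0. destruct Ta as [[u [Hu Hue]] _]. set (r := 1 + a).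
  assert (HL : forall x, In x X -> Lop X u x = vscal r u x).
  { intros x Hx. pose proof (Lv_char n adj u x Hx) as E. fold X in E. rewrite <- E.
    unfold Lv, vscal. rewrite Hue; auto. unfold r; ring. }
  assert (HK : forall x, In x X -> Kop X (Kop X u) x = (r - / r) * u x).
  { intros x Hx. pose proof (equal_f (LL X u) x) as E. unfold vsub at 1 in E.
    rewrite (Lop_ext X (Lop X u) (vscal r u) HL x Hx) in E.
    rewrite Lop_vscal in E. unfold vscal at 1 in E. rewrite HL in E by auto.
    rewrite (Kop_ext X (Kop X (Lop X u)) (Kop X (vscal r u)) x) in E.
    2:{ intros; apply Kop_ext; auto. }
    rewrite !Kop_vscal in E. unfold vscal in E.
    assert (0 < r) by (unfold r; lra).
    apply (Rmult_eq_reg_l r); [|lra].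
    replace (r * ((r - / r) * u x)) with (r * (r * u x) - u x) by (field; lra). lra. }
  apply (top_bound X (abs_hodge X) eta u); auto.
  intros x Hx. rewrite Ha_app. apply HK; auto.
Qed.

Lemma hydro_core n adj a a2 eta p : let X := simplices n adj in
  top X Am a -> top X (negM Am) a2 -> a2 <= a -> 0 <= a ->
  nz X p -> (forall x, In x X -> Kop X (Kop X p) x = eta * p x) -> (Ev p = p \/ Vv p = p) ->
  eta <= (1 + a) - / (1 + a).
Proof.
  intros X Ta Ta2 Ha2 Ha0 Hp HKp Hsup.
  assert (Hr : 0 <= (1 + a) - / (1 + a)).
  { assert (/ (1 + a) <= 1) by (rewrite <- Rinv_1; apply Rinv_le_contravar; lra). lra. }
  destruct (Rlt_dec eta 0) as [Hneg|Hpos]; [lra|].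
  set (sq := sqrt (eta * eta + 4)).
  assert (Hsq : sq * sq = eta * eta + 4) by (apply sqrt_sqrt; nra).
  assert (Hsq0 : 0 <= sq) by apply sqrt_pos.
  set (mp := (eta + sq) / 2). set (mm := (eta - sq) / 2).
  assert (Hmu : mp * mm = -1) by (unfold mp, mm; nra).
  assert (Hmp1 : 1 <= mp) by (unfold mp; nra).
  assert (Hsum : eta = mp + mm) by (unfold mp, mm; field).
  set (y := Lop X p).
  assert (Hy1 : forall x, In x X -> Kop X (Kop X y) x = eta * y x).
  { intros x Hx. unfold y. rewrite (equal_f (LK X p) x).
    rewrite (Lop_ext X (Kop X (Kop X p)) (vscal eta p)) by (auto; intros; unfold vscal; auto).
    rewrite Lop_vscal. reflexivity. }
  assert (Hy2 : forall x, In x X -> Lop X y x = eta * y x + p x).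
  { intros x Hx. pose proof (equal_f (LL X p) x) as E. unfold vsub at 1 in E. fold y in E.
    rewrite Hy1 in E by auto. lra. }
  set (p' := vsub y (vscal mm p)).
  assert (Hp' : forall x, In x X -> Lop X p' x = mp * p' x).
  { intros x Hx. unfold p'. rewrite Lop_vsub, Lop_vscal. unfold vsub, vscal. fold y.
    rewrite Hy2 by auto. assert (mp * (mm * p x) = - p x) by (rewrite <- Rmult_assoc, Hmu; ring).
    nra. }
  destruct (classic (nz X p')) as [Hnz|Hnz].
  - assert (He : forall x, In x X -> app X Am p' x = (mp - 1) * p' x).
    { intros x Hx. pose proof (Lv_char n adj p' x Hx) as E. fold X in E. unfold Lv in E.
      rewrite Hp' in E by auto. lra. }
    pose proof (top_bound X Am a p' (mp - 1) Ta Hnz He).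
    assert (mm = - / mp) by (apply (Rmult_eq_reg_l mp); [rewrite Hmu; field|]; lra).
    rewrite Hsum, H0. pose proof (finv_mono mp (1 + a) Hmp1 ltac:(lra)). lra.
  - assert (Hz : forall x, In x X -> p' x = 0).
    { intros x Hx. destruct (Req_dec (p' x) 0); auto. exfalso; apply Hnz; exists x; auto. }
    assert (Hyp : forall x, In x X -> Lop X p x = mm * p x).
    { intros x Hx. pose proof (Hz x Hx). unfold p', vsub, vscal in H. fold y. lra. }
    assert (Hn : forall x, In x X -> Kop X p x = 0).
    { intros x Hx. pose proof (Hyp x Hx) as E. unfold Lop, vsub, vadd, vscal in E.
      destruct Hsup as [HE|HV].
      - destruct x as [c|a0 b0].
        + rewrite Kop_Kop_Ev_SV in E. assert (p (SV c) = 0) by (rewrite <- HE; reflexivity).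
          rewrite H in E. simpl Ev in E. lra.
        + rewrite <- HE. change (Kop X (Ev p) (SE a0 b0)) with (Kop X (Ev p) (SE a0 b0)).
          rewrite <- Vv_Kop. reflexivity.
      - assert (HE : Ev p = vzero) by (rewrite <- HV; apply Ev_Vv).
        destruct x as [c|a0 b0].
        + rewrite <- HV. rewrite <- Ev_Kop. reflexivity.
        + assert (p (SE a0 b0) = 0) by (rewrite <- HV; reflexivity).
          rewrite HE, Kop_zero, Kop_zero in E. rewrite H in E. unfold vzero in E. lra. }
    destruct Hp as [z [Hz' Hpz]].
    pose proof (HKp z Hz') as E. unfold Kop at 1, app in E. rewrite sumX_zero in E.
    2:{ intros x Hx. fold (Kop X p). rewrite Hn; auto; ring. }
    assert (eta = 0) by (apply (Rmult_eq_reg_r (p z)); auto; lra). lra.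
Qed.

Lemma hydro_down n adj a a2 eta : let X := simplices n adj in
  top X Am a -> top X (negM Am) a2 -> a2 <= a -> 0 <= a ->
  top X (abs_hodge X) eta -> eta <= (1 + a) - / (1 + a).
Proof.
  intros X Ta Ta2 Ha2 Ha0 Th. destruct Th as [[w [Hw Hwe]] _].
  assert (HK : forall x, In x X -> Kop X (Kop X w) x = eta * w x) by (intros; rewrite <- Ha_app; auto).
  destruct Hw as [z [Hz Hwz]]. destruct z as [c|a0 b0].
  - apply (hydro_core n adj a a2 eta (Vv w)); auto.
    + exists (SV c); auto.
    + intros x Hx. rewrite <- Ev_Kop, <- Vv_Kop. destruct x; unfold Vv, Ev; auto; ring.
    + right; apply Vv_Vv.
  - apply (hydro_core n adj a a2 eta (Ev w)); auto.
    + exists (SE a0 b0); auto.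
    + intros x Hx. rewrite <- Vv_Kop, <- Ev_Kop. destruct x; unfold Vv, Ev; auto; ring.
    + left; apply Ev_Ev.
Qed.


Lemma A_norm X a a2 : NoDup X -> X <> [] -> top X Am a -> top X (negM Am) a2 -> a2 <= a -> 0 <= a ->
  forall v, dot X (app X Am v) (app X Am v) <= a * a * dot X v v.
Proof.
  intros Hnd Hne Ta Ta2 Ha2 Ha0.
  set (A2 := mat_mul X Am Am).
  assert (Happ : forall v x, app X A2 v x = app X Am (app X Am v) x).
  { intros v x. unfold A2, app, mat_mul.
    rewrite (sumX_ext X _ (fun z => sumX X (fun y => Am x y * Am y z * v z))).
    2:{ intros. rewrite <- sumX_scal_r. reflexivity. }
    rewrite sumX_swap. apply sumX_ext; intros. rewrite <- sumX_scal. apply sumX_ext; intros. ring. }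
  assert (Hqf : forall v, qf X A2 v = dot X (app X Am v) (app X Am v)).
  { intros v. unfold qf. rewrite (dot_ext X v v (app X A2 v) (app X Am (app X Am v))) by auto.
    apply dot_sym_app. apply Am_sym. }
  assert (HsA2 : symX X A2).
  { intros x y _ _. unfold A2, mat_mul. apply sumX_ext; intros. unfold Am. rewrite (cg_adj_sym x x0), (cg_adj_sym x0 y). ring. }
  destruct (rayleigh X A2 Hnd Hne HsA2) as [k Tk].
  assert (Hk : k <= a * a).
  { destruct Tk as [[w [Hw Hwe]] _].
    assert (Hk0 : 0 <= k).
    { pose proof (qf_eig X A2 w k Hwe). rewrite Hqf in H. pose proof (dot_nonneg X (app X Am w)).
      pose proof (dot_pos X w Hw). nra. }
    set (s := sqrt k). assert (Hss : s * s = k) by (apply sqrt_sqrt; lra). assert (Hs0 : 0 <= s) by apply sqrt_pos.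
    set (y := fun x => app X Am w x + s * w x).
    assert (Hy : forall x, In x X -> app X Am y x = s * y x).
    { intros x Hx. unfold y. unfold app at 1. rewrite (sumX_ext X _ (fun z => Am x z * app X Am w z + s * (Am x z * w z))) by (intros; ring).
      rewrite sumX_add, sumX_scal. fold (app X Am (app X Am w) x) (app X Am w x).
      rewrite <- Happ, Hwe by auto. rewrite <- Hss. ring. }
    assert (s <= a).
    { destruct (classic (nz X y)) as [Hnz|Hnz].
      - apply (top_bound X Am a y s Ta Hnz Hy).
      - assert (He : forall x, In x X -> app X (negM Am) w x = s * w x).
        { intros x Hx. rewrite app_negM. destruct (Req_dec (y x) 0) as [E|E].
          - unfold y in E. lra.
          - exfalso; apply Hnz; exists x; auto. }
        pose proof (top_bound X (negM Am) a2 w s Ta2 Hw He). lra. }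
    rewrite <- Hss. nra. }
  intros v. rewrite <- Hqf. destruct Tk as [_ Tk]. pose proof (Tk v). pose proof (dot_nonneg X v). nra.
Qed.

Lemma iter_norm X a a2 : NoDup X -> X <> [] -> top X Am a -> top X (negM Am) a2 -> a2 <= a -> 0 <= a ->
  forall k v, dot X (iterA X k v) (iterA X k v) <= (a ^ k) * (a ^ k) * dot X v v.
Proof.
  intros Hnd Hne Ta Ta2 Ha2 Ha0 k v. induction k; simpl iterA.
  - simpl. lra.
  - pose proof (A_norm X a a2 Hnd Hne Ta Ta2 Ha2 Ha0 (iterA X k v)). simpl pow.
    assert (0 <= a * a) by nra. nra.
Qed.

Lemma walk_upper X a a2 : NoDup X -> X <> [] -> top X Am a -> top X (negM Am) a2 -> a2 <= a -> 0 <= a ->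
  forall k x, In x X -> INR (walks X k x) <= a ^ k * INR (length X).
Proof.
  intros Hnd Hne Ta Ta2 Ha2 Ha0 k x Hx.
  pose proof (iter_norm X a a2 Hnd Hne Ta Ta2 Ha2 Ha0 k (fun _ => 1)) as H.
  assert (HN : dot X (fun _ => 1) (fun _ => 1) = INR (length X)).
  { rewrite <- sumX_const1. unfold dot. apply sumX_ext; intros; ring. }
  rewrite HN in H. pose proof (sq_le_dot X (iterA X k (fun _ => 1)) x Hx).
  rewrite <- walks_iter in H0.
  assert (HN1 : 1 <= INR (length X)).
  { destruct X; [destruct Hx|]. simpl length. rewrite S_INR. pose proof (pos_INR (length X)). lra. }
  set (P := INR (walks X k x)) in *. assert (HP : 0 <= P) by apply pos_INR.
  assert (Hak : 0 <= a ^ k) by (apply pow_le; auto).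
  set (B := a ^ k * INR (length X)).
  assert (P * P <= B * B) by (unfold B; nra).
  assert (0 <= B) by (unfold B; nra).
  nra.
Qed.

Lemma walk_lower X a : NoDup X -> X <> [] -> top X Am a -> 0 <= a ->
  forall k, exists x0, In x0 X /\ a ^ k <= INR (walks X k x0).
Proof.
  intros Hnd Hne Ta Ha0 k. destruct Ta as [[u [Hu Hue]] _].
  destruct (exists_max X (fun x => Rabs (u x)) Hne) as [x0 [Hx0 Hm]].
  set (m := Rabs (u x0)).
  assert (Hmp : 0 < m).
  { destruct Hu as [z [Hz Huz]]. pose proof (Hm z Hz). pose proof (Rabs_pos_lt _ Huz). unfold m; lra. }
  assert (Hit : forall k x, In x X -> iterA X k u x = a ^ k * u x).
  { induction k0; intros x Hx; simpl iterA; [simpl; ring|].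
    rewrite (app_ext X Am (iterA X k0 u) (fun z => a ^ k0 * u z)) by auto.
    rewrite app_scal, Hue by auto. simpl; ring. }
  assert (Hbd : forall k x, In x X -> Rabs (iterA X k u x) <= m * iterA X k (fun _ => 1) x).
  { induction k0; intros x Hx; simpl iterA; [rewrite Rmult_1_r; apply Hm; auto|].
    unfold app. eapply Rle_trans; [apply sumX_abs|]. rewrite <- sumX_scal. apply sumX_le; intros z Hz.
    rewrite Rabs_mult. rewrite (Rabs_right (Am x z)) by (apply Rle_ge, Am_nonneg).
    pose proof (IHk0 z Hz). pose proof (Am_nonneg x z). nra. }
  exists x0. split; auto. rewrite walks_iter.
  pose proof (Hbd k x0 Hx0). rewrite Hit in H by auto. rewrite Rabs_mult in H.
  rewrite (Rabs_right (a ^ k)) in H by (apply Rle_ge, pow_le; auto). fold m in H.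
  apply (Rmult_le_reg_r m); auto. lra.
Qed.

Lemma kth_bounds (P a N : R) (k : nat) : (1 <= k)%nat -> 0 <= a -> 1 <= N ->
  a ^ k <= P -> P <= a ^ k * N ->
  a <= kth_root P k /\ kth_root P k <= a * Rpower N (/ INR k).
Proof.
  intros Hk Ha HN Hlo Hhi. unfold kth_root.
  assert (HkR : 0 < INR k) by (apply lt_0_INR; lia).
  destruct (Req_dec a 0) as [Ha0|Ha0].
  - subst a. rewrite pow_i in Hlo, Hhi by lia.
    destruct (Rle_dec P 0); [lra|]. lra.
  - assert (Hap : 0 < a) by lra. assert (Hak : 0 < a ^ k) by (apply pow_lt; auto).
    destruct (Rle_dec P 0); [lra|].
    assert (Hroot : Rpower (a ^ k) (/ INR k) = a).
    { rewrite <- Rpower_pow by auto. rewrite Rpower_mult. rewrite Rinv_r by lra. apply Rpower_1; auto. }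
    split.
    + rewrite <- Hroot at 1. apply Rle_Rpower_l; [left; apply Rinv_0_lt_compat; auto|lra].
    + eapply Rle_trans; [apply Rle_Rpower_l with (b := a ^ k * N); [left; apply Rinv_0_lt_compat; auto|lra]|].
      rewrite <- Rpower_mult_distr by lra. rewrite Hroot. lra.
Qed.

Lemma exp_small y : 0 <= y <= 1/2 -> exp y <= 1 + 2 * y.
Proof. intros Hy. pose proof (exp_ineq1_le (- y)).
  assert (exp y * exp (- y) = 1) by (rewrite <- exp_plus; replace (y + - y) with 0 by ring; apply exp_0).
  pose proof (exp_pos y). nra. Qed.

Lemma conv_lemma (t : nat -> R) a L : 0 <= a -> 0 <= L ->
  (forall k, a <= t k /\ t k <= a * exp (/ INR (S k) * L)) ->
  Un_cv (fun k => (1 + t k) - / (1 + t k)) ((1 + a) - / (1 + a)).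
Proof.
  intros Ha HL Ht eps Heps.
  set (B := 2 * L + 4 * a * L / eps + 1).
  destruct (INR_archimed 1 B) as [K HK]; [lra|]. rewrite Rmult_1_r in HK.
  exists K. intros k Hk. unfold Rdist.
  set (D := INR (S k)).
  assert (HD : D > B) by (unfold D; rewrite S_INR; pose proof (le_INR K k Hk); lra).
  assert (HB0 : 4 * a * L / eps >= 0) by (unfold Rdiv; apply Rle_ge; apply Rmult_le_pos; [nra|left; apply Rinv_0_lt_compat; lra]).
  assert (HB1 : 0 < B) by (unfold B; lra). assert (HDp : 0 < D) by lra.
  set (y := / D * L).
  assert (HyD : y * D = L) by (unfold y; field; lra).
  assert (Hy0 : 0 <= y) by (unfold y; apply Rmult_le_pos; [left; apply Rinv_0_lt_compat|]; lra).
  assert (HD2 : D > 2 * L) by (unfold B in HD; lra).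
  assert (Hy1 : y <= 1/2) by (destruct (Rle_dec y (1/2)); auto; nra).
  assert (HaL : eps * B >= 4 * a * L) by (unfold B; replace (eps * (2 * L + 4 * a * L / eps + 1)) with (2 * eps * L + 4 * a * L + eps) by (field; lra); nra).
  assert (Hay : 4 * a * y < eps) by nra.
  destruct (Ht k) as [Hlo Hhi]. fold D in Hhi. fold y in Hhi.
  pose proof (exp_small y (conj Hy0 Hy1)).
  assert (t k - a <= 2 * a * y) by nra.
  pose proof (finv_mono (1 + a) (1 + t k) ltac:(lra) ltac:(lra)).
  pose proof (finv_lip (1 + a) (1 + t k) ltac:(lra) ltac:(lra)).
  rewrite Rabs_right by lra. lra.
Qed.


Lemma negM_sym X M : symX X M -> symX X (negM M).
Proof. intros H x y Hx Hy. unfold negM. rewrite H; auto. Qed.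

Lemma Am_diag x : Am x x = 0.
Proof. unfold Am, cg_adj. destruct x; simpl; rewrite ?Nat.eqb_refl; simpl; reflexivity. Qed.

Lemma in_len (x : simplex) l : In x l -> (1 <= length l)%nat.
Proof. destruct l; [intros []|simpl; lia]. Qed.

Theorem mainTheorem4 (n : nat) (adj : nat -> nat -> bool) (o : nat -> nat -> bool)
  (adj_sym : forall i j, adj i j = adj j i)
  (adj_irr : forall i, adj i i = false)
  (n_pos : (1 <= n)%nat) :
  let X := simplices n adj in
  exists rho : R,
    spectral_radius X (hodge X o) rho /\
    (forall k : nat, (1 <= k)%nat -> rho <= hbound X k) /\
    exists rho' : R,
      spectral_radius X (abs_hodge X) rho' /\
      Un_cv (fun k => hbound X (S k)) rho'.
Proof.
  intros X.
  assert (Hnd : NoDup X) by apply NoDup_simplices.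
  assert (Hin0 : In (SV 0) X) by (apply in_simplices; left; exists 0%nat; split; auto; lia).
  assert (Hne : X <> []) by (intros E; rewrite E in Hin0; destruct Hin0).
  destruct (rayleigh X Am Hnd Hne (Am_sym X)) as [a Ta].
  destruct (rayleigh X (negM Am) Hnd Hne (negM_sym X _ (Am_sym X))) as [a2 Ta2].
  destruct (rayleigh X (abs_hodge X) Hnd Hne (Ha_sym X)) as [eta Te].
  destruct (rayleigh X (negM (abs_hodge X)) Hnd Hne (negM_sym X _ (Ha_sym X))) as [eta2 Te2].
  destruct (rayleigh X (hodge X o) Hnd Hne (Hs_sym X o)) as [s1 Ts1].
  destruct (rayleigh X (negM (hodge X o)) Hnd Hne (negM_sym X _ (Hs_sym X o))) as [s2 Ts2].
  assert (Ha2 : a2 <= a).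
  { apply (top_dom X (negM Am) Am a2 a Ta2 Ta). intros x y. unfold negM. rewrite Rabs_Ropp.
    rewrite Rabs_right; [lra|apply Rle_ge, Am_nonneg]. }
  assert (Ha0 : 0 <= a).
  { destruct Ta as [_ Ta']. pose proof (Ta' (ev (SV 0))). rewrite qf_ev, dot_ev, Am_diag in H by auto. lra. }
  assert (He2 : eta2 <= eta).
  { apply (top_dom X (negM (abs_hodge X)) (abs_hodge X) eta2 eta Te2 Te). intros x y. unfold negM. rewrite Rabs_Ropp.
    rewrite Rabs_right; [lra|apply Rle_ge, Ha_nonneg]. }
  assert (Hs1 : s1 <= eta) by (apply (top_dom X (hodge X o) (abs_hodge X) s1 eta Ts1 Te); apply Hs_abs).
  assert (Hs2 : s2 <= eta).
  { apply (top_dom X (negM (hodge X o)) (abs_hodge X) s2 eta Ts2 Te). intros x y. unfold negM. rewrite Rabs_Ropp. apply Hs_abs. }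
  assert (Heta : eta = (1 + a) - / (1 + a)).
  { pose proof (hydro_up n adj a eta Ta Te Ha0). pose proof (hydro_down n adj a a2 eta Ta Ta2 Ha2 Ha0 Te). lra. }
  set (N := INR (length X)).
  assert (HN1 : 1 <= N).
  { unfold N. pose proof (in_len _ _ Hin0). apply le_INR in H. simpl in H. lra. }
  assert (Hbounds : forall k, (1 <= k)%nat ->
     a <= kth_root (INR (Pmax X k)) k /\ kth_root (INR (Pmax X k)) k <= a * Rpower N (/ INR k)).
  { intros k Hk. apply kth_bounds; auto.
    - destruct (walk_lower X a Hnd Hne Ta Ha0 k) as [x0 [Hx0 Hw]].
      eapply Rle_trans; [apply Hw|]. apply le_INR. unfold Pmax. apply fmax_ge; auto.
    - unfold Pmax. destruct (fmax_cases X (walks X k)) as [E|[x [Hx E]]]; rewrite E.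
      + simpl. pose proof (pow_le a k Ha0). nra.
      + apply (walk_upper X a a2 Hnd Hne Ta Ta2 Ha2 Ha0 k x Hx). }
  exists (Rmax s1 s2). split; [apply spec_rad; auto; apply Hs_sym|]. split.
  - intros k Hk. unfold hbound, rk. destruct (Hbounds k Hk) as [Hlo _].
    pose proof (finv_mono (1 + a) (1 + kth_root (INR (Pmax X k)) k) ltac:(lra) ltac:(lra)).
    apply Rmax_lub; lra.
  - exists eta. split.
    + assert (E : Rmax eta eta2 = eta) by (apply Rmax_left; lra). rewrite <- E. apply spec_rad; auto. apply Ha_sym.
    + rewrite Heta. unfold hbound, rk.
      apply (conv_lemma (fun k => kth_root (INR (Pmax X (S k))) (S k)) a (ln N)); auto.
      * destruct (Req_dec N 1) as [E|E]; [rewrite E, ln_1; lra|]. left. rewrite <- ln_1. apply ln_increasing; lra.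
      * intros k. destruct (Hbounds (S k) ltac:(lia)) as [H1 H2]. split; auto.
Qed.
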